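(* Let $S$ be a finite $p$-group for an odd prime $p$. Then $J(S)\leq \mathfrak{X}(S)$ if and only if $\mathfrak{X}(L)=\mathfrak{X}(S)$ for every subgroup $L$ of $S$ with $\mathfrak{X}(S)\leq L\leq J(S)\mathfrak{X}(S)$.
   Context: For a finite $p$-group $G$ and subgroups $A,B$, write $[A,B;1]=[A,B]$ and $[A,B;k]=[[A,B;k-1],B]$. $\Omega_1(G)$ denotes the subgroup generated by the elements of order $p$ in $G$. The Oliver subgroup $\mathfrak{X}(G)$ of a finite $p$-group $G$ is the unique largest normal subgroup $K$ of $G$ admitting a chain $1=Q_0\leq Q_1\leq\cdots\leq Q_n=K$ of normal subgroups $Q_i\unlhd G$ such that $[\Omega_1(C_G(Q_{i-1})),Q_i;p-1]=1$ for each $1\leq i\leq n$. For a subgroup $L\leq S$, $\mathfrak{X}(L)$ is the Oliver subgroup of $L$ regarded as a $p$-group in its own right. $J(S)$ is the Thompson subgroup of $S$: the subgroup generated by all elementary abelian $p$-subgroups of $S$ whose rank equals the $p$-rank of $S$ (the largest rank of an elementary abelian $p$-subgroup of $S$). *)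

(* Defs.v *)
From Stdlib Require Import ClassicalEpsilon.
From mathcomp Require Import all_boot all_fingroup all_solvable.
Set Implicit Arguments. Unset Strict Implicit. Unset Printing Implicit Defensive.
Import GroupScope.
Local Open Scope group_scope.

Section Oliver.
Variable gT : finGroupType.
Implicit Types (A B : {set gT}) (G K Q : {group gT}).

Fixpoint comm_iter A B (k : nat) : {set gT} :=
  match k with
  | 0 => A
  | k'.+1 => [~: comm_iter A B k', B]
  end.

Definition oliver_step (p : nat) G (Q1 Q2 : {group gT}) : bool :=
  [&& Q1 \subset Q2, Q2 <| G &
      comm_iter 'Ohm_1('C_G(Q1)) Q2 p.-1 == 1].

Definition admits_oliver_chain (p : nat) G K : Prop :=
  exists s : seq {group gT}, path (oliver_step p G) 1%G s /\ last 1%G s = K.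

Definition admits_oliver_chainb (p : nat) G K : bool :=
  if excluded_middle_informative (admits_oliver_chain p G K) then true
  else false.

(* The Oliver subgroup X(G) of the p-group G: the largest normal subgroup
   admitting an Oliver chain, realised as the join of all such subgroups. *)
Definition oliver (p : nat) G : {set gT} :=
  << \bigcup_(K : {group gT} | (K <| G) && admits_oliver_chainb p G K) K >>.

Definition thompson (p : nat) G : {set gT} :=
  << \bigcup_(E in 'E_p^('r_p(G))(G)) E >>.

End Oliver.

(* Main.v *)
Require Import Defs.
From Stdlib Require Import ClassicalEpsilon.
From mathcomp Require Import all_boot all_fingroup all_solvable.
From mathcomp Require Import zify.
Import GroupScope.

Module OliverAux.
Set Implicit Arguments. Unset Strict Implicit. Unset Printing Implicit Defensive.
Local Open Scope group_scope.

Section Aux.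
Variable gT : finGroupType.
Implicit Types (A B : {set gT}) (G H K L Q S R : {group gT}).

Lemma chainbP p G K : reflect (admits_oliver_chain p G K) (admits_oliver_chainb p G K).
Proof.
rewrite /admits_oliver_chainb; case: excluded_middle_informative => h.
  by apply: ReflectT. by apply: ReflectF.
Qed.

Lemma comm_iterS A A' B k : A \subset A' -> comm_iter A B k \subset comm_iter A' B k.
Proof. by move=> sAA'; elim: k => //= k IH; apply: commSg. Qed.

Lemma comm_iter1 A B k j : comm_iter A B k = 1 -> comm_iter A B (k + j) = 1.
Proof. by move=> h; elim: j => [|j IH]; rewrite ?addn0 // addnS /= IH comm1G. Qed.

Lemma commg_centM A K H : A \subset 'C(K) -> [~: A, K * H] = [~: A, H].
Proof.
move=> cAK; apply/eqP; rewrite eqEsubset (commgS _ (mulG_subr K H)) andbT.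
rewrite gen_subG; apply/subsetP=> _ /imset2P[a kh Aa /imset2P[k h Kk Hh ->] ->].
have ->: [~ a, k * h] = [~ a, h].
  rewrite commgMJ; have ->: [~ a, k] = 1.
    by apply/eqP/commgP; move/centP: (subsetP cAK a Aa); apply.
  by rewrite conj1g mulg1.
exact: mem_commg.
Qed.

Lemma comm_iter1g G B k : 1 \in comm_iter G B k.
Proof. by case: k => [|k] /=; rewrite group1. Qed.

Lemma comm_iter_triv G G' B k : G \subset G' ->
  comm_iter G' B k == 1 -> comm_iter G B k == 1.
Proof.
move=> sGG' /eqP e; rewrite eqEsubset sub1set comm_iter1g andbT -e.
exact: comm_iterS.
Qed.

Lemma path_mono p G x s : path (oliver_step p G) x s -> x \subset last x s.
Proof.
elim: s x => //= y s IH x /andP[/and3P[sxy _ _] /IH]; exact: subset_trans.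
Qed.

Lemma path_transfer p S L x s : path (oliver_step p S) x s ->
  last x s \subset L -> L \subset S -> path (oliver_step p L) x s.
Proof.
elim: s x => //= y s IH x /andP[/and3P[sxy nyS ci] ps] sl sLS.
have syL : y \subset L := subset_trans (path_mono ps) sl.
rewrite IH // andbT /oliver_step sxy (normalS syL sLS nyS) /=.
by apply: (comm_iter_triv _ ci); apply: OhmS; apply: setSI.
Qed.


Lemma comm_iter_sub1 G B k : comm_iter G B k \subset [1] -> comm_iter G B k == 1.
Proof. by move=> s; rewrite eqEsubset s sub1set comm_iter1g. Qed.

Lemma step_join p S K1 R0 R1 : K1 <| S ->
  oliver_step p S R0 R1 -> oliver_step p S (K1 <*> R0)%G (K1 <*> R1)%G.
Proof.
move=> nK1 /and3P[s01 nR1 ci].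
have sR1S := normal_sub nR1; have nK1S := normal_norm nK1.
rewrite /oliver_step /= normalY // andTb.
rewrite join_subG joing_subl (subset_trans s01 (joing_subr _ _)) /=.
rewrite (norm_joinEr (subset_trans sR1S nK1S)).
set W' := 'Ohm_1(_).
have cW' : W' \subset 'C(K1).
  apply: subset_trans (Ohm_sub _ _) _; apply: subset_trans (subsetIr _ _) _.
  exact: centS (joing_subl _ _).
have nCR1 : R1 \subset 'N('C(K1)) by apply: norms_cent; exact: (subset_trans sR1S nK1S).
have key k : comm_iter W' (K1 * R1) k \subset comm_iter W' R1 k /\
             comm_iter W' (K1 * R1) k \subset 'C(K1).
  elim: k => [|k [IH1 IH2]] /=; first by split.
  rewrite commg_centM //; split; first exact: commSg.
  apply: subset_trans (commSg _ IH2) _; by rewrite commg_subl.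
apply: comm_iter_sub1; apply: subset_trans (proj1 (key _)) _.
have sW : W' \subset 'Ohm_1('C_S(R0)).
  by apply: OhmS; apply: setIS; apply: centS; apply: joing_subr.
by rewrite (eqP (comm_iter_triv sW ci)).
Qed.

Lemma path_join p S K1 x s : K1 <| S -> path (oliver_step p S) x s ->
  path (oliver_step p S) (K1 <*> x)%G (map (fun R => (K1 <*> R)%G) s).
Proof.
move=> nK1; elim: s x => //= y s IH x /andP[st ps].
by rewrite step_join // IH.
Qed.

Lemma chain_join p S K1 K2 : K1 <| S -> admits_oliver_chain p S K1 ->
  admits_oliver_chain p S K2 -> admits_oliver_chain p S (K1 <*> K2)%G.
Proof.
move=> nK1 [s1 [p1 l1]] [s2 [p2 l2]].
have e1 : (K1 <*> 1)%G = K1 by apply: val_inj; rewrite /= joingG1.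
exists (s1 ++ map (fun R => (K1 <*> R)%G) s2); split.
  by rewrite cat_path p1 l1 /= -{1}e1 path_join.
by rewrite last_cat l1 -{1}e1 (last_map (fun R => (K1 <*> R)%G)) l2.
Qed.


Lemma oliver_max p S : exists K0 : {group gT},
  [/\ K0 <| S, admits_oliver_chain p S K0, oliver p S = K0 &
      forall K, K <| S -> admits_oliver_chain p S K -> K \subset K0].
Proof.
pose P := fun K : {group gT} => (K <| S) && admits_oliver_chainb p S K.
have P1 : P 1%G.
  by rewrite /P normal1; apply/chainbP; exists [::].
case: (arg_maxnP (fun K : {group gT} => #|K|) P1) => K0 /andP[nK0 /chainbP cK0] maxK0.
have maxS : forall K, K <| S -> admits_oliver_chain p S K -> K \subset K0.
  move=> K nK cK.
  have PJ : P (K0 <*> K)%G by rewrite /P normalY //; apply/chainbP/chain_join.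
  have := maxK0 _ PJ => le.
  have /eqP eJ : K0 :==: (K0 <*> K)%G by rewrite eqEcard joing_subl; exact: le.
  by rewrite eJ joing_subr.
exists K0; split=> //.
apply/eqP; rewrite eqEsubset gen_subG; apply/andP; split.
  by apply/bigcupsP=> K /andP[nK /chainbP cK]; apply: maxS.
apply: sub_gen; apply: (bigcup_sup K0); by rewrite nK0; apply/chainbP.
Qed.

Lemma oliver_sub p G : oliver p G \subset G.
Proof. by rewrite gen_subG; apply/bigcupsP=> K /andP[/normal_sub]. Qed.

Lemma oliver_in p G K : K <| G -> admits_oliver_chain p G K -> K \subset oliver p G.
Proof.
move=> nK cK; apply: sub_gen; apply: (bigcup_sup K); by rewrite nK; apply/chainbP.
Qed.


Lemma comm_iter_2 G B (p : nat) : 2 <= p.-1 -> comm_iter G B 2 \subset [1] ->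
  comm_iter G B p.-1 == 1.
Proof.
move=> p2 s; have e2 := eqP (comm_iter_sub1 s).
by rewrite -(subnKC p2) (comm_iter1 _ e2).
Qed.

Lemma cent_oliver (p : nat) S K0 : p.-group S -> 2 <= p.-1 -> K0 <| S ->
  admits_oliver_chain p S K0 ->
  (forall K, K <| S -> admits_oliver_chain p S K -> K \subset K0) ->
  'C_S(K0) \subset K0.
Proof.
move=> pS p2 nK0 [s0 [ps0 l0]] maxK0.
set C := 'C_S(K0).
apply: contraT => nCX.
have nilC : nilpotent C by apply: (pgroup_nil (pgroupS (subsetIl _ _) pS)).
case/lcnP: nilC => n Ln.
have ex : exists m, 'L_m.+1(C) \subset K0 by exists n; rewrite Ln sub1G.
case: (ex_minnP ex) => m sm minm.
case: m sm minm => [|k] sm minm; first by rewrite lcn1 in sm; rewrite sm in nCX.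
set T := 'L_k.+1(C).
have nTX : ~~ (T \subset K0).
  by apply/negP=> sT; have := minm k sT; rewrite ltnn.
have sTC : T \subset C by apply: char_sub; exact: lcn_char.
have sRX : [~: T, C] \subset K0 by rewrite -lcnSn.
have nSK0 := normal_norm nK0.
have nC : C <| S.
  have := subcent_normal S K0; by rewrite (setIidPl nSK0).
have nT : T <| S by apply: char_normal_trans nC; exact: lcn_char.
have sTS : T \subset S := normal_sub nT.
have cCK0 : C \subset 'C(K0) := subsetIr _ _.
set Q := (K0 <*> T)%G.
have nQ : Q <| S by apply: normalY.
have cQ : admits_oliver_chain p S Q.
  exists (rcons s0 Q); split; last by rewrite last_rcons.
  rewrite rcons_path ps0 l0 /oliver_step nQ joing_subl /=.
  rewrite (norm_joinEr (subset_trans sTS nSK0)).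
  apply: comm_iter_2 => //=.
  set W' := 'Ohm_1(C).
  have cW' : W' \subset 'C(K0) := subset_trans (Ohm_sub _ _) cCK0.
  have s1 : [~: W', T] \subset C :&: K0.
    rewrite subsetI; apply/andP; split.
      apply: subset_trans (commSg _ (Ohm_sub _ _)) _.
      by rewrite commg_subl; apply: subset_trans sTC (normG _).
    by apply: subset_trans (commSg _ (Ohm_sub _ _)) _; rewrite commGC.
  have cs1 : [~: W', T] \subset 'C(K0).
    by apply: subset_trans s1 _; apply: subset_trans (subsetIl _ _) cCK0.
  rewrite (commg_centM T cW') (commg_centM T cs1).
  apply: subset_trans (commSg _ s1) _.
  have -> : [~: C :&: K0, T] = 1.
    apply/commG1P; rewrite centsC; apply: subset_trans sTC _.
    by apply: subset_trans cCK0 _; apply: centS; exact: subsetIr.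
  exact: subxx.
have := maxK0 _ nQ cQ; rewrite join_subG => /andP[_ sT].
by rewrite sT in nTX.
Qed.


Lemma abelemY (p : nat) G H : p.-abelem G -> p.-abelem H -> G \subset 'C(H) ->
  p.-abelem (G <*> H).
Proof.
move=> aG aH cGH.
have abY : abelian (G <*> H).
  by rewrite abelianY (abelem_abelian aG) (abelem_abelian aH) centsC cGH.
have pY : p.-group (G <*> H).
  by rewrite cent_joinEl // pgroupM (abelem_pgroup aG) (abelem_pgroup aH).
apply/(abelem_Ohm1P abY pY); apply/eqP; rewrite eqEsubset Ohm_sub /=.
rewrite join_subG; apply/andP; split.
  rewrite -{1}(abelem_Ohm1P (abelem_abelian aG) (abelem_pgroup aG) aG).
  exact: OhmS (joing_subl _ _).
rewrite -{1}(abelem_Ohm1P (abelem_abelian aH) (abelem_pgroup aH) aH).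
exact: OhmS (joing_subr _ _).
Qed.


Lemma quad_step (p : nat) (S W A : {group gT}) : prime p -> p.-group S ->
  W \subset S -> S \subset 'N(W) -> p.-abelem W ->
  A \in 'E_p^('r_p(S))(S) -> [~: W, A] != 1 -> [~: [~: W, A], A] != 1 ->
  exists A' : {group gT}, [/\ A' \in 'E_p^('r_p(S))(S), [~: W, A'] != 1 &
     'C_A(W) \proper 'C_A'(W)].
Proof.
move=> pr_p pS sWS nWS abelW EA ntA nq.
have [sAS abelA rA] := pnElemP EA.
have cAA := abelem_abelian abelA; have cWW := abelem_abelian abelW.
have nWA : A \subset 'N(W) := subset_trans sAS nWS.
have sRW : [~: W, A] \subset W by rewrite commg_subl.
have : ~~ ([~: W, A] \subset 'C(A)).
  by apply: contra nq => c; apply/eqP/commG1P.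
rewrite gen_subG => /subsetPn[_ /imset2P[v a1 vW a1A ->] na1].
set U := <<[set [~ v, a] | a in A]>>.
set Z := 'C_W(A).
set B := 'C_A(U).
have cvW a : a \in A -> [~ v, a] \in W.
  by move=> aA; apply: (subsetP sRW); apply: mem_commg.
have sUW : U \subset W.
  by rewrite gen_subG; apply/subsetP=> _ /imsetP[a aA ->]; apply: cvW.
have sUR : U \subset [~: W, A].
  rewrite gen_subG; apply/subsetP=> _ /imsetP[a aA ->]; exact: mem_commg.
have sAWZ : A :&: W \subset Z.
  apply/subsetP=> x /setIP[xA xW]; rewrite inE xW /=.
  exact: (subsetP cAA x xA).
have sZW : Z \subset W := subsetIl _ _.
have cZA : Z \subset 'C(A) := subsetIr _ _.
have nZA : A \subset 'N(Z).
  by rewrite normsI // norms_cent // normG.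
have R4 c : c \in A -> [~ v, c] \in Z -> c \in B.
  move=> cA vcZ; rewrite inE cA /= cent_gen; apply/centP=> _ /imsetP[a aA ->].
  apply: commute_sym; apply/commgP/conjg_fixP.
  have e1 := commgMJ v a c; have e2 := commgMJ v c a.
  have ac : a * c = c * a by apply: (centsP cAA).
  have fix1 : [~ v, c] ^ a = [~ v, c].
    by apply/conjg_fixP/commgP; move/centP: (subsetP cZA _ vcZ); apply.
  rewrite ac in e1; rewrite fix1 in e2.
  have cm : commute [~ v, c] ([~ v, a] ^ c).
    apply: (centsP cWW); [exact: cvW | by rewrite memJ_norm ?cvW ?(subsetP nWA)].
  rewrite e2 cm in e1; exact: (mulIg _ _ _ (esym e1)).
have R5 a a0 : a \in A -> a0 \in A -> [~ v, a] * [~ v, a0]^-1 \in Z ->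
    a * a0^-1 \in B.
  move=> aA a0A h; set c := a * a0^-1.
  have cA : c \in A by rewrite groupM ?groupV.
  apply: R4 => //.
  have ea : a = c * a0 by rewrite /c mulgKV.
  have e := commgMJ v c a0; rewrite -ea in e.
  have : [~ v, c] ^ a0 \in Z.
    have -> : [~ v, c] ^ a0 = [~ v, a] * [~ v, a0]^-1.
      rewrite e; have cm : commute [~ v, a0] ([~ v, c] ^ a0).
        apply: (centsP cWW); first exact: cvW.
        by rewrite memJ_norm ?(subsetP nWA) // cvW.
      by rewrite cm mulgK.
    exact: h.
  by rewrite memJ_norm // (subsetP nZA).
set UZ := (<<U>> <*> Z)%G.
have sUUZ : U \subset UZ by apply: subset_trans (joing_subl _ _); rewrite genGid.
have sZUZ : Z \subset UZ := joing_subr _ _.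
have sUZW : UZ \subset W by rewrite join_subG genGid sUW sZW.
have I1 : #|A| <= #|B| * #|UZ : Z|.
  pose phi := fun a => Z :* [~ v, a].
  rewrite -sum1_card (partition_big_imset phi) /=.
  apply: leq_trans (_ : \sum_(j in phi @: A) #|B| <= _).
    apply: leq_sum => _ /imsetP[a0 a0A ->].
    rewrite sum1dep_card -(card_rcoset B a0); apply: subset_leq_card.
    apply/subsetP=> a; rewrite inE => /andP[aA /eqP e].
    rewrite mem_rcoset; apply: R5 => //; rewrite -mem_rcoset -[Z :* _]/(phi a0) -e.
    exact: rcoset_refl.
  rewrite sum_nat_const mulnC leq_mul2l; apply/orP; right.
  rewrite /indexg; apply: subset_leq_card; apply/subsetP=> _ /imsetP[a aA ->].
  rewrite /phi mem_rcosets; apply: (subsetP (mulG_subr _ _)).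
  apply: (subsetP sUUZ); apply: mem_gen; exact: imset_f.
have sBA : B \subset A := subsetIl _ _.
have cBUZ : B \subset 'C(UZ).
  rewrite centY subsetI cent_gen subsetIr /=.
  by rewrite centsC; apply: subset_trans cZA (centS sBA).
set As := (B <*> UZ)%G.
have eAs : As :=: B * UZ by apply: cent_joinEr; rewrite centsC.
have sAsS : As \subset S.
  by rewrite join_subG (subset_trans sBA sAS) (subset_trans sUZW sWS).
have abelAs : p.-abelem As := abelemY (abelemS sBA abelA) (abelemS sUZW abelW) cBUZ.
have cardI : #|B :&: UZ| <= #|Z|.
  by apply: subset_leq_card; apply: subset_trans sAWZ; apply: setISS.
have cardAs : #|A| <= #|As|.
  have e1 := mul_cardG B UZ; have e2 := Lagrange sZUZ.
  rewrite -(leq_pmul2r (cardG_gt0 Z)); apply: leq_trans (_ : #|B| * #|UZ : Z| * #|Z| <= _).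
    by rewrite leq_mul2r I1 orbT.
  have -> : (#|B| * #|UZ : Z| * #|Z| = #|As| * #|B :&: UZ|)%N.
    by rewrite -mulnA (mulnC #|UZ : Z|) e2 e1 eAs.
  by rewrite leq_mul2l cardI orbT.
have p1 : 1 < p := prime_gt1 pr_p.
have rAs : logn p #|As| = 'r_p(S).
  apply/eqP; rewrite eqn_leq logn_le_p_rank /=; last by apply/pElemP.
  rewrite -rA -(leq_exp2l _ _ p1) -!card_pgroup //; exact: abelem_pgroup.
have EAs : As \in 'E_p^('r_p(S))(S) by apply/pnElemP.
have sUA : U \subset As by apply: subset_trans sUUZ (joing_subr _ _).
exists As; split=> //.
  apply/negP => /eqP tr.
  have cBW : B \subset 'C(W).
    have : [~: W, B] = 1.
      by apply/eqP; rewrite -subG1 -tr commgS // joing_subl.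
    by move/commG1P; rewrite centsC.
  set CA := 'C_A(W).
  have sBCA : B \subset CA by rewrite subsetI sBA cBW.
  have cCAW : CA \subset 'C(W) := subsetIr _ _.
  set D := (CA <*> W)%G.
  have abelD : p.-abelem D := abelemY (abelemS (subsetIl _ _) abelA) abelW cCAW.
  have sDS : D \subset S by rewrite join_subG (subset_trans (subsetIl _ _) sAS) sWS.
  have cardD : #|D| <= #|A|.
    rewrite (card_pgroup (abelem_pgroup abelD)) (card_pgroup (abelem_pgroup abelA)).
    by rewrite leq_exp2l // rA logn_le_p_rank //; apply/pElemP.
  have e3 := mul_cardG CA W.
  have eD : D :=: CA * W by apply: cent_joinEr; rewrite centsC.
  have cardI2 : #|CA :&: W| <= #|Z|.
    by apply: subset_leq_card; apply: subset_trans sAWZ; apply: setSI; exact: subsetIl.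
  have le1 : (#|CA| * #|W| <= #|CA| * #|UZ|)%N.
    rewrite e3 -eD; apply: leq_trans (_ : #|A| * #|Z| <= _)%N.
      exact: leq_mul.
    rewrite -(Lagrange sZUZ) (mulnC #|Z|) mulnA leq_mul2r; apply/orP; right.
    apply: leq_trans I1 _; rewrite leq_mul2r subset_leq_card ?orbT //.
  rewrite leq_pmul2l ?cardG_gt0 // in le1.
  have eW : UZ :==: W by rewrite eqEcard sUZW le1.
  set H := [~: W, A].
  have sHH : H \subset [~: H, A].
    apply: subset_trans (commSg _ (_ : W \subset UZ)) _; first by rewrite (eqP eW).
    have cUZ : Z \subset 'C(<<U>>).
      rewrite centsC genGid; apply: subset_trans sUW _.
      exact: subset_trans cWW (centS sZW).
    rewrite /= cent_joinEr // commMG.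
      have -> : [~: Z, A] = 1 by apply/commG1P.
      by rewrite mulg1; apply: commSg; rewrite /= gen_subG.
    apply: cents_norm; rewrite centsC.
    apply: subset_trans (commSg _ (_ : <<U>> \subset W)) _; first by rewrite gen_subG.
    by apply: subset_trans sRW _; apply: subset_trans cWW (centS sZW).
  set G0 := (W <*> A)%G.
  have nilG0 : nilpotent G0.
    by apply: (pgroup_nil (pgroupS _ pS)); rewrite join_subG sWS sAS.
  have nA : A \subset 'N_G0(H) by rewrite subsetI joing_subr commg_normr.
  have := nil_comm_properl nilG0 (subset_trans sRW (joing_subl _ _)) ntA nA.
  by rewrite properE sHH andbF.
rewrite properE; apply/andP; split.
  rewrite subsetI subsetIr andbT; apply: subset_trans (joing_subl _ _).
  by rewrite subsetI subsetIl /=; apply: subset_trans (subsetIr _ _) (centS sUW).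
apply/negP=> h.
have sUC : U \subset 'C_As(W) by rewrite subsetI sUA (subset_trans sUW cWW).
have sUZ : U \subset Z.
  apply: subset_trans sAWZ; rewrite subsetI sUW andbT.
  exact: subset_trans sUC (subset_trans h (subsetIl _ _)).
have : [~ v, a1] \in U by apply: mem_gen; exact: imset_f.
move/(subsetP sUZ)/(subsetP cZA) => c; by rewrite c in na1.
Qed.


Lemma quad_replace (p : nat) (S W A : {group gT}) : prime p -> p.-group S ->
  W \subset S -> S \subset 'N(W) -> p.-abelem W ->
  A \in 'E_p^('r_p(S))(S) -> [~: W, A] != 1 ->
  exists A' : {group gT}, [/\ A' \in 'E_p^('r_p(S))(S), [~: W, A'] != 1 &
     [~: [~: W, A'], A'] = 1].
Proof.
move=> pr_p pS sWS nWS abelW.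
suff main : forall m (A : {group gT}), #|S| - #|'C_A(W)| < m ->
    A \in 'E_p^('r_p(S))(S) -> [~: W, A] != 1 ->
  exists A' : {group gT}, [/\ A' \in 'E_p^('r_p(S))(S), [~: W, A'] != 1 &
     [~: [~: W, A'], A'] = 1].
  by move=> EA ntA; apply: (main _ A (ltnSn _)).
elim=> // m IH B lt EB ntB.
case: (eqVneq [~: [~: W, B], B] 1) => [q|nq]; first by exists B.
have [B' [EB' ntB' pr]] := quad_step pr_p pS sWS nWS abelW EB ntB nq.
apply: (IH B') => //.
have c1 := proper_card pr.
have [sB'S _ _] := pnElemP EB'.
have c2 : #|'C_B'(W)| <= #|S| by apply: subset_leq_card; apply: subset_trans (subsetIl _ _) sB'S.
lia.
Qed.

End Aux.

End OliverAux.
Import OliverAux.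
Unset Implicit Arguments. Set Strict Implicit.

Theorem theorem1p4 (gT : finGroupType) (p : nat) (S : {group gT}) :
  prime p -> odd p -> p.-group S ->
  (thompson p S \subset oliver p S) <->
  (forall L : {group gT},
      oliver p S \subset L -> L \subset thompson p S * oliver p S ->
      oliver p L = oliver p S).
Proof.
move=> pr_p odd_p pS.
have p2 : 2 <= p.-1.
  have p3 : 2 < p.
    rewrite ltn_neqAle prime_gt1 // andbT.
    by apply/eqP=> e; rewrite -e in odd_p.
  by case: p p3 {pr_p odd_p pS} => [|[|[|q]]].
have [X0 [nX0 cX0 eX maxX0]] := oliver_max p S.
rewrite eX.
have sX0S := normal_sub nX0.
have centX : 'C_S(X0) \subset X0 := cent_oliver pS p2 nX0 cX0 maxX0.
have [s0 [ps0 l0]] := cX0.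
have inL (L : {group gT}) : X0 \subset L -> L \subset S -> X0 \subset oliver p L.
  move=> sXL sLS; apply: oliver_in; first exact: normalS sXL sLS nX0.
  by exists s0; split=> //; apply: path_transfer ps0 _ sLS; rewrite l0.
split.
  move=> sJX L sXL sLJX.
  have sLX : L \subset X0.
    apply: subset_trans sLJX _; rewrite -{2}(mulGid X0); exact: mulSg.
  apply/eqP; rewrite eqEsubset inL ?andbT //; last exact: subset_trans sLX sX0S.
  exact: subset_trans (oliver_sub p L) sLX.
move=> HL; apply: contraT => nJX.
set r := 'r_p(S).
have [E EE nEX] : exists2 E : {group gT}, E \in 'E_p^r(S) & ~~ (E \subset X0).
  case: (pickP [pred E : {group gT} | (E \in 'E_p^r(S)) && ~~ (E \subset X0)]).
    by move=> E /andP[EE nEX]; exists E.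
  move=> none; case/negP: nJX; rewrite /thompson gen_subG; apply/bigcupsP=> E EE.
  by have := none E; rewrite /= EE /= => /negbFE.
set W := 'Ohm_1('Z(X0)).
have sWZ : W \subset 'Z(X0) := Ohm_sub _ _.
have sWX : W \subset X0 := subset_trans sWZ (center_sub _).
have sWS : W \subset S := subset_trans sWX sX0S.
have nW : W <| S.
  apply: char_normal_trans nX0; apply: char_trans (Ohm_char _ _) (center_char _).
have nWS := normal_norm nW.
have abelW : p.-abelem W.
  apply: Ohm1_abelem (center_abelian _).
  exact: pgroupS (subset_trans (center_sub _) sX0S) pS.
have cWX : W \subset 'C(X0) := subset_trans sWZ (subsetIr _ _).
have cXW : X0 \subset 'C(W) by rewrite centsC.
have inJ (A : {group gT}) a : A \in 'E_p^r(S) -> a \in A -> a \in thompson p S.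
  by move=> EA aA; apply: mem_gen; apply/bigcupP; exists A.
have [a [aS aJ naX qa]] : exists a, [/\ a \in S, a \in thompson p S, a \notin X0 &
    [~: [~: W, <[a]>], <[a]>] = 1].
  have [sES _ _] := pnElemP EE.
  case: (eqVneq [~: W, E] 1) => [tE | ntE].
    have [a aE naX] := subsetPn nEX.
    exists a; split; [exact: subsetP sES a aE | exact: inJ E a EE aE | exact: naX |].
    have -> : [~: W, <[a]>] = 1.
      by apply/eqP; rewrite -subG1 -tE commgS // cycle_subG.
    exact: comm1G.
  have [A' [EA' ntA' qA']] := quad_replace pr_p pS sWS nWS abelW EE ntE.
  have [sA'S _ _] := pnElemP EA'.
  have : ~~ (A' \subset 'C(W)).
    by apply: contra ntA' => c; apply/eqP/commG1P; rewrite centsC.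
  case/subsetPn=> a aA' naW.
  exists a; split; [exact: subsetP sA'S a aA' | exact: inJ A' a EA' aA' | |].
    by apply: contra naW; apply: (subsetP cXW).
  apply/eqP; rewrite -subG1 -qA' commgSS // ?cycle_subG //.
  by rewrite commgS // cycle_subG.
have naN : <[a]> \subset 'N(X0) by rewrite cycle_subG (subsetP (normal_norm nX0)).
set L := (X0 <*> <[a]>)%G.
have eL : L :=: X0 * <[a]> := norm_joinEr naN.
have sXL : X0 \subset L := joing_subl _ _.
have sLS : L \subset S by rewrite join_subG sX0S cycle_subG.
have sLJX : L \subset thompson p S * X0.
  rewrite eL -(normC naN); apply: mulSg; by rewrite cycle_subG.
have eO := HL L sXL sLJX.
have aL : a \in L by apply: (subsetP (joing_subr _ _)); exact: cycle_id.
have : L \subset oliver p L.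
  apply: oliver_in; first exact: normal_refl.
  exists (rcons s0 L); split; last by rewrite last_rcons.
  rewrite rcons_path (path_transfer ps0) //; last by rewrite l0.
  rewrite l0 /oliver_step sXL normal_refl /=.
  have sC : 'Ohm_1('C_L(X0)) \subset W.
    apply: OhmS; rewrite subsetI; apply/andP; split; last exact: subsetIr.
    apply: subset_trans centX; exact: setSI.
  apply: (comm_iter_triv sC); apply: comm_iter_2 => //=.
  rewrite eL (commg_centM _ cWX).
  have sR : [~: W, <[a]>] \subset 'C(X0).
    by apply: subset_trans cWX; rewrite commg_subl; apply: subset_trans nWS; rewrite cycle_subG.
  by rewrite (commg_centM _ sR) qa.
rewrite eO => /subsetP/(_ a aL) aX.
by rewrite aX in naX.
Qed.
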